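(* Let $n>p\ge 1$, let $X\in\mathbb{R}^{n\times p}$ have rows $x_1^T,\dots,x_n^T$, let $Y=(y_1,\dots,y_n)^T\in\mathbb{R}^n$, and let $h$ be an integer with $p\le h<n$. Assume: (A1) $x_i\neq \pm x_j$ for all $i\neq j$, and $x_i\neq 0$ for all $i$; (A2) $r^2_{(h)}(\beta)>0$ for every $\beta\in\mathbb{R}^p$; (A3) for every $(\circ_1,\dots,\circ_{n-1})\in\{+,-\}^{n-1}$ the $(n-1)\times p$ matrix with rows $(x_1\circ_1 x_2)^T,\dots,(x_1\circ_{n-1}x_n)^T$ has rank $p$; (A4) $X$ has $h$-full rank, i.e. $X^T\mathrm{diag}(w)X$ is invertible for every $w\in Q^{(n,h)}$. Then the Borders Scanning Algorithm (BSA) described in the context terminates and its output $\hat\beta$ is a global minimizer of $OF(\beta)=\sum_{i=1}^h r^2_{(i)}(\beta)$ over $\beta\in\mathbb{R}^p$, i.e. $\hat\beta$ is the LTS estimate.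
   Context: For $\beta\in\mathbb{R}^p$, $r_i(\beta)=y_i-x_i^T\beta$ and $r^2_{(1)}(\beta)\le\dots\le r^2_{(n)}(\beta)$ are the squared residuals $r_1^2(\beta),\dots,r_n^2(\beta)$ sorted increasingly. $Q^{(n,h)}=\{w\in\{0,1\}^n: w^1+\dots+w^n=h\}$. For $w\in Q^{(n,h)}$, $W=\mathrm{diag}(w)$ and $J(w)=\|W(Y-X(X^TWX)^{-1}X^TWY)\|^2$. A pair $(\beta,w)\in\mathbb{R}^p\times Q^{(n,h)}$ is said to be in relation $Z$ if $\sum_{i=1}^h r^2_{(i)}(\beta)=\sum_{i=1}^n w^i r_i^2(\beta)$. For $a,b\in\mathbb{R}^k$ and $\circ\in\{+,-\}$, $a\circ b$ denotes $a+b$ or $a-b$. BSA: set $J_{\min}=+\infty$. For every $(p+1)$-element subset of $\{1,\dots,n\}$, with its elements listed (in a fixed order) as $i_1,\dots,i_{p+1}$, and for every $(\circ_1,\dots,\circ_p)\in\{+,-\}^p$: if the $p\times p$ linear system $(x_{i_1}\circ_j x_{i_{j+1}})^T\beta=y_{i_1}\circ_j y_{i_{j+1}}$, $j=1,\dots,p$, is regular, let $\beta_0$ be its unique solution; compute and sort the squared residuals at $\beta_0$; if $r^2_{i_1}(\beta_0)=r^2_{(h)}(\beta_0)=r^2_{(h+1)}(\beta_0)$, determine all $w\in Q^{(n,h)}$ with $(\beta_0,w)\in Z$, and for each such $w$, if $J(w)<J_{\min}$, set $J_{\min}=J(w)$ and $w_{\min}=w$. (Non-regular systems are skipped.) After all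 subsets and sign vectors are processed, output $\hat\beta=(X^TW_{\min}X)^{-1}X^TW_{\min}Y$ with $W_{\min}=\mathrm{diag}(w_{\min})$. *)

(* Defs.v *)
From HB Require Import structures.
From mathcomp Require Import all_boot all_order all_algebra.
From mathcomp Require Import reals.
Set Implicit Arguments. Unset Strict Implicit. Unset Printing Implicit Defensive.
Import Order.TTheory GRing.Theory Num.Theory.
Local Open Scope ring_scope.

Section LTS.
Variables (R : realType) (n p h : nat).
Variables (X : 'M[R]_(n, p)) (Y : 'cV[R]_n).

Definition resid (beta : 'cV[R]_p) (i : 'I_n) : R := Y i 0 - (X *m beta) i 0.

(* squared residuals sorted increasingly; r^2_(k) is the (k-1)-th entry (0-based) *)
Definition sorted_sq_res (beta : 'cV[R]_p) : seq R :=
  sort <=%R [seq (resid beta i) ^+ 2 | i <- enum 'I_n].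

Definition ord_sq_res (beta : 'cV[R]_p) (k : nat) : R :=
  nth 0 (sorted_sq_res beta) k.-1.

Definition OF (beta : 'cV[R]_p) : R := \sum_(1 <= k < h.+1) ord_sq_res beta k.

Definition inQ (w : {ffun 'I_n -> bool}) : bool := (\sum_i (w i : nat) == h)%N.

Definition Wmx (w : {ffun 'I_n -> bool}) : 'M[R]_n := diag_mx (\row_i (w i)%:R).

Definition beta_of (w : {ffun 'I_n -> bool}) : 'cV[R]_p :=
  invmx (X^T *m Wmx w *m X) *m (X^T *m Wmx w *m Y).

Definition sqnorm (v : 'cV[R]_n) : R := \sum_i (v i 0) ^+ 2.

Definition J (w : {ffun 'I_n -> bool}) : R :=
  sqnorm (Wmx w *m (Y - X *m beta_of w)).

Definition Zrel (beta : 'cV[R]_p) (w : {ffun 'I_n -> bool}) : bool :=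
  inQ w && (\sum_(1 <= k < h.+1) ord_sq_res beta k
             == \sum_i (w i)%:R * (resid beta i) ^+ 2).

(* a (p+1)-element subset of {1..n}, listed in increasing order i_1 < ... < i_{p+1}:
   f ord0 = i_1 and f (lift ord0 j) = i_{j+2} *)
Definition incr_tuple (f : {ffun 'I_p.+1 -> 'I_n}) : bool :=
  [forall a : 'I_p.+1, forall b : 'I_p.+1, (a < b)%N ==> (f a < f b)%N].

Definition sgnR (b : bool) : R := if b then 1 else -1.

Definition sys_mx (f : {ffun 'I_p.+1 -> 'I_n}) (s : {ffun 'I_p -> bool}) : 'M[R]_p :=
  \matrix_(j < p, c < p) (X (f ord0) c + sgnR (s j) * X (f (lift ord0 j)) c).

Definition sys_rhs (f : {ffun 'I_p.+1 -> 'I_n}) (s : {ffun 'I_p -> bool}) : 'cV[R]_p :=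
  \col_(j < p) (Y (f ord0) 0 + sgnR (s j) * Y (f (lift ord0 j)) 0).

(* state: None = (J_min = +oo, no w_min yet), Some w = current w_min *)
Definition bsa_update (st : option {ffun 'I_n -> bool}) (w : {ffun 'I_n -> bool}) :=
  match st with
  | None => Some w
  | Some wm => if J w < J wm then Some w else Some wm
  end.

Definition bsa_step (st : option {ffun 'I_n -> bool})
    (fs : {ffun 'I_p.+1 -> 'I_n} * {ffun 'I_p -> bool}) :=
  let: (f, s) := fs in
  let A := sys_mx f s in
  if A \in unitmx then
    let beta0 := invmx A *m sys_rhs f s in
    if ((resid beta0 (f ord0)) ^+ 2 == ord_sq_res beta0 h)
       && (ord_sq_res beta0 h == ord_sq_res beta0 h.+1) then
      foldl bsa_update st [seq w <- enum {ffun 'I_n -> bool} | Zrel beta0 w]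
    else st
  else st.

Definition bsa_items : seq ({ffun 'I_p.+1 -> 'I_n} * {ffun 'I_p -> bool}) :=
  [seq (f, s) | f <- [seq f <- enum {ffun 'I_p.+1 -> 'I_n} | incr_tuple f],
                s <- enum {ffun 'I_p -> bool}].

Definition bsa_wmin : option {ffun 'I_n -> bool} := foldl bsa_step None bsa_items.

Definition bsa_output : option 'cV[R]_p := omap beta_of bsa_wmin.

Definition A1 : Prop :=
  (forall i j : 'I_n, i != j -> row i X != row j X /\ row i X != - row j X) /\
  (forall i : 'I_n, row i X != 0).

Definition A2 : Prop := forall beta : 'cV[R]_p, 0 < ord_sq_res beta h.

(* rows (x_1 o_k x_{k+1})^T, k = 1..n-1; i0 is the index of x_1 *)
Definition A3 : Prop :=
  forall (i0 : 'I_n), val i0 = 0%N ->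
  forall s : {ffun 'I_n.-1 -> bool},
    \rank (\matrix_(k < n.-1, c < p)
             (X i0 c + sgnR (s k) * X (insubd i0 k.+1) c)) = p.

Definition A4 : Prop := forall w : {ffun 'I_n -> bool}, inQ w -> (X^T *m Wmx w *m X) \in unitmx.

End LTS.

(* Main.v *)
Require Import Defs.
From HB Require Import structures.
From mathcomp Require Import all_boot all_order all_algebra.
From mathcomp Require Import reals.
From mathcomp Require Import zify ring lra.
Set Implicit Arguments. Unset Strict Implicit. Unset Printing Implicit Defensive.
Import Order.TTheory GRing.Theory Num.Theory.
Local Open Scope ring_scope.

Section Exch.
Variables (R : realType) (I : finType) (f : I -> R).

Lemma exch (A B : {set I}) : #|A| = #|B| ->
  (forall a b, a \in A :\: B -> b \in B :\: A -> f a <= f b) ->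
  \sum_(i in A) f i <= \sum_(i in B) f i.
Proof.
move=> cAB H.
rewrite (big_setID B) [X in _ <= X](big_setID A) /= setIC lerD2l.
have cD : #|A :\: B| = #|B :\: A|.
  by move: (cardsID B A) (cardsID A B); rewrite setIC cAB => <-; move/eqP; rewrite eqn_add2l => /eqP.
case: (set_0Vmem (A :\: B)) => [E|[a0 Ha0]].
  rewrite E big_set0.
  have -> : B :\: A = set0 by apply/eqP; rewrite -cards_eq0 -cD E cards0.
  by rewrite big_set0.
set am := [arg max_(i > a0 in A :\: B) f i]%O.
have [am_in am_max] : am \in A :\: B /\ forall i, i \in A :\: B -> f i <= f am.
  rewrite /am; case: arg_maxP => // i Hi Hmax; split => // j Hj; exact: Hmax.
apply: (@le_trans _ _ (\sum_(i in A :\: B) f am)).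
  by apply: ler_sum => i Hi; apply: am_max.
rewrite sumr_const cD -sumr_const.
by apply: ler_sum => i Hi; apply: H.
Qed.
End Exch.

Section Sorting.
Variables (R : realType) (n p h : nat) (X : 'M[R]_(n, p)) (Y : 'cV[R]_n).
Hypotheses (hn : (h < n)%N) (h0 : (0 < h)%N).

Definition sq (beta : 'cV[R]_p) (i : 'I_n) : R := resid X Y beta i ^+ 2.
Definition sig (beta : 'cV[R]_p) : seq 'I_n := sort (relpre (sq beta) <=%R) (enum 'I_n).
Definition i0 : 'I_n := Ordinal (leq_ltn_trans (leq0n h) hn).

Lemma size_sig beta : size (sig beta) = n.
Proof. by rewrite size_sort size_enum_ord. Qed.

Lemma uniq_sig beta : uniq (sig beta).
Proof. by rewrite sort_uniq enum_uniq. Qed.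

Lemma mem_sig beta i : i \in sig beta.
Proof. by rewrite mem_sort mem_enum. Qed.

Lemma sorted_sig beta : sorted (relpre (sq beta) <=%R) (sig beta).
Proof. apply: sort_sorted => x y /=; exact: le_total. Qed.

Lemma sig_mono beta (k l : nat) : (k <= l)%N -> (l < n)%N ->
  sq beta (nth i0 (sig beta) k) <= sq beta (nth i0 (sig beta) l).
Proof.
move=> kl ln.
have tr : transitive (relpre (sq beta) <=%R) by move=> x y z /=; exact: le_trans.
have rf : reflexive (relpre (sq beta) <=%R) by move=> x /=.
have := @sorted_leq_nth _ (relpre (sq beta) <=%R) tr rf i0 _ (sorted_sig beta) k l.
apply => //; rewrite ?inE ?size_sig //; exact: (leq_ltn_trans kl ln).
Qed.

Lemma in_take_idx beta t : t \in take h (sig beta) ->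
  exists2 k, (k < h)%N & t = nth i0 (sig beta) k.
Proof.
move=> Ht; have sz : size (take h (sig beta)) = h by rewrite size_take size_sig hn.
have lt : (index t (take h (sig beta)) < h)%N by rewrite -{2}sz index_mem.
exists (index t (take h (sig beta))) => //.
by rewrite -(nth_take _ lt) nth_index.
Qed.

Lemma out_take_idx beta b : b \notin take h (sig beta) ->
  exists2 k, (h <= k < n)%N & b = nth i0 (sig beta) k.
Proof.
move=> Hb; exists (index b (sig beta)); last by rewrite nth_index // mem_sig.
have := index_mem b (sig beta); rewrite mem_sig size_sig => ->; rewrite andbT.
rewrite leqNgt; apply/negP => lt; apply/negP: Hb; apply/negPn.
rewrite -(nth_index i0 (mem_sig beta b)) -(nth_take _ lt); apply: mem_nth.
by rewrite size_take size_sig hn.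
Qed.

Lemma in_take_le beta t : t \in take h (sig beta) ->
  sq beta t <= sq beta (nth i0 (sig beta) h.-1).
Proof.
case/in_take_idx => k kh ->; apply: sig_mono; first by rewrite -ltnS prednK.
by rewrite prednK // ltnW.
Qed.

Lemma out_take_ge beta b : b \notin take h (sig beta) ->
  sq beta (nth i0 (sig beta) h) <= sq beta b.
Proof. by case/out_take_idx => k /andP[hk kn] ->; apply: sig_mono. Qed.

Lemma cross_le beta t b : t \in take h (sig beta) -> b \notin take h (sig beta) ->
  sq beta t <= sq beta b.
Proof.
move=> Ht Hb; apply: (le_trans (in_take_le Ht)); apply: le_trans (out_take_ge Hb).
by apply: sig_mono => //; exact: leq_pred.
Qed.

Definition Tset beta : {set 'I_n} := [set i | i \in take h (sig beta)].

Lemma card_Tset beta : #|Tset beta| = h.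
Proof.
rewrite /Tset cardsE; move/card_uniqP: (take_uniq h (uniq_sig beta)) => ->.
by rewrite size_take size_sig hn.
Qed.

Lemma ord_sq_nth beta k : (k < n)%N ->
  ord_sq_res X Y beta k.+1 = sq beta (nth i0 (sig beta) k).
Proof.
move=> kn; rewrite /ord_sq_res /sorted_sq_res sort_map /= (nth_map i0) //.
by rewrite size_sig.
Qed.

Lemma OF_T beta : OF h X Y beta = \sum_(i in Tset beta) sq beta i.
Proof.
rewrite /OF big_add1 /=.
rewrite (@eq_big_nat _ _ _ 0 h _ (fun k => sq beta (nth i0 (sig beta) k))); last first.
  move=> k /andP[_ kh]; rewrite ord_sq_nth //; exact: ltn_trans kh hn.
rewrite /Tset (eq_bigl (fun i => i \in take h (sig beta))); last by move=> i; rewrite inE.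
rewrite -big_uniq; last exact: take_uniq (uniq_sig beta).
rewrite (big_nth i0) size_take size_sig hn.
by apply: eq_big_nat => k /andP[_ kh]; rewrite nth_take.
Qed.

Definition supp (w : {ffun 'I_n -> bool}) : {set 'I_n} := [set i | w i].

Lemma wsum (w : {ffun 'I_n -> bool}) beta : \sum_i (w i)%:R * resid X Y beta i ^+ 2 = \sum_(i in supp w) sq beta i.
Proof.
rewrite [RHS]big_mkcond /=; apply: eq_bigr => i _; rewrite /supp inE.
by case: (w i); rewrite /= ?mul1r ?mul0r.
Qed.

Lemma inQ_card (w : {ffun 'I_n -> bool}) : inQ h w = (#|supp w| == h).
Proof.
rewrite /inQ -sum1_card /supp.
have -> : (\sum_(i in [set i | w i]) 1 = \sum_i (w i : nat))%N.
  rewrite big_mkcond /=; apply: eq_bigr => i _; rewrite inE; by case: (w i).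
by [].
Qed.

Lemma OF_le (W : {set 'I_n}) beta : #|W| = h -> OF h X Y beta <= \sum_(i in W) sq beta i.
Proof.
move=> cW; rewrite OF_T; apply: exch; first by rewrite card_Tset cW.
move=> a b; rewrite !inE => /andP[_ Ha] /andP[Hb _]; exact: cross_le.
Qed.

Lemma region_OF (W : {set 'I_n}) beta : #|W| = h ->
  (forall a b, a \in W -> b \notin W -> sq beta a <= sq beta b) ->
  OF h X Y beta = \sum_(i in W) sq beta i.
Proof.
move=> cW reg; apply/eqP; rewrite eq_le OF_le //= OF_T.
apply: exch; first by rewrite card_Tset cW.
move=> a b; rewrite !inE => /andP[_ Ha] /andP[Hb _]; exact: reg.
Qed.

Lemma exists_w beta : exists w, inQ h w /\ Zrel h X Y beta w.
Proof.
exists [ffun i => i \in Tset beta].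
have sw : supp [ffun i => i \in Tset beta] = Tset beta.
  by apply/setP => i; rewrite /supp inE ffunE.
have iq : inQ h [ffun i => i \in Tset beta] by rewrite inQ_card sw card_Tset.
split => //; rewrite /Zrel iq /= wsum sw -OF_T.
by [].
Qed.

Lemma vertex_sort (W : {set 'I_n}) beta a j m : #|W| = h ->
  (forall a b, a \in W -> b \notin W -> sq beta a <= sq beta b) ->
  a \in W -> j \notin W -> sq beta a = m -> sq beta j = m ->
  ord_sq_res X Y beta h = m /\ ord_sq_res X Y beta h.+1 = m.
Proof.
move=> cW reg aW jW am jm.
have hh : h = h.-1.+1 by rewrite prednK.
have e1 : ord_sq_res X Y beta h = sq beta (nth i0 (sig beta) h.-1).
  by rewrite {1}hh ord_sq_nth // (leq_ltn_trans (leq_pred h) hn).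
rewrite e1 ord_sq_nth //.
have ge1 : m <= sq beta (nth i0 (sig beta) h.-1).
  rewrite leNgt; apply/negP => lt.
  have sub : Tset beta \subset W :\ a.
    apply/subsetP => t; rewrite inE => Ht; rewrite !inE.
    have lt2 := le_lt_trans (in_take_le Ht) lt.
    apply/andP; split.
      by apply/eqP => ta; move: lt2; rewrite ta am ltxx.
    apply/negPn/negP => tW; have := reg a t aW tW; rewrite am => /(lt_le_trans lt2).
    by rewrite ltxx.
  move: (subset_leq_card sub); rewrite card_Tset.
  have := cardsD1 a W; rewrite aW cW /=; lia.
have le2 : sq beta (nth i0 (sig beta) h) <= m.
  rewrite leNgt; apply/negP => lt.
  have sub : ~: Tset beta \subset ~: W :\ j.
    apply/subsetP => t; rewrite !inE => Ht.
    have lt2 := lt_le_trans lt (out_take_ge Ht).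
    apply/andP; split.
      by apply/eqP => tj; move: lt2; rewrite tj jm ltxx.
    apply/negP => tW; have := reg t j tW jW; rewrite jm => /(le_lt_trans)/(_ lt2).
    by rewrite ltxx.
  move: (subset_leq_card sub).
  have c1 : #|~: Tset beta| = (n - h)%N by have := cardsC (Tset beta); rewrite card_Tset card_ord; lia.
  have c2 : #|~: W| = (n - h)%N by have := cardsC W; rewrite cW card_ord; lia.
  have := cardsD1 j (~: W); rewrite inE jW c2 c1 /=; lia.
have mid : sq beta (nth i0 (sig beta) h.-1) <= sq beta (nth i0 (sig beta) h).
  by apply: sig_mono => //; exact: leq_pred.
split; apply/eqP; rewrite eq_le.
- by rewrite ge1 (le_trans mid le2).
- by rewrite le2 (le_trans ge1 mid).
Qed.

End Sorting.

Section LS.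
Variables (R : realType) (n p h : nat) (X : 'M[R]_(n, p)) (Y : 'cV[R]_n).

Lemma Wmx_mulE (w : {ffun 'I_n -> bool}) (v : 'cV[R]_n) i :
  (Wmx R w *m v) i 0 = (w i)%:R * v i 0.
Proof. by rewrite /Wmx mul_diag_mx !mxE. Qed.

Lemma residE beta i : resid X Y beta i = (Y - X *m beta) i 0.
Proof. by rewrite /resid !mxE. Qed.

Lemma bool_sq (b : bool) : ((b : nat)%:R : R) ^+ 2 = (b : nat)%:R.
Proof. by case: b; rewrite /= ?expr1n ?expr0n. Qed.

Lemma J_eq (w : {ffun 'I_n -> bool}) :
  J X Y w = \sum_i (w i)%:R * resid X Y (beta_of X Y w) i ^+ 2.
Proof.
rewrite /J /sqnorm; apply: eq_bigr => i _.
by rewrite Wmx_mulE residE exprMn bool_sq.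
Qed.

Lemma J_le (w : {ffun 'I_n -> bool}) beta :
  (X^T *m Wmx R w *m X) \in unitmx ->
  J X Y w <= \sum_i (w i)%:R * resid X Y beta i ^+ 2.
Proof.
move=> U; rewrite J_eq.
set bh := beta_of X Y w.
set e := Y - X *m bh.
set d := beta - bh.
have normal : X^T *m Wmx R w *m e = 0.
  rewrite /e mulmxBr /bh /beta_of.
  have -> : X^T *m Wmx R w *m (X *m (invmx (X^T *m Wmx R w *m X) *m (X^T *m Wmx R w *m Y)))
     = (X^T *m Wmx R w *m X) *m (invmx (X^T *m Wmx R w *m X) *m (X^T *m Wmx R w *m Y)).
    by rewrite !mulmxA.
  by rewrite mulKVmx // subrr.
have normc : forall c, \sum_i X i c * ((w i)%:R * e i 0) = 0.
  move=> c; have H0 : (X^T *m (Wmx R w *m e)) c 0 = 0 by rewrite mulmxA normal mxE.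
  rewrite -[RHS]H0 mxE.
  by apply: eq_bigr => i _; rewrite Wmx_mulE [X^T c i]mxE.
have rE : forall i, resid X Y beta i = e i 0 - (X *m d) i 0.
  move=> i; rewrite residE /e /d mulmxBr.
  by rewrite !mxE; ring.
have cross : \sum_i (w i)%:R * (e i 0 * (X *m d) i 0) = 0.
  rewrite (eq_bigr (fun i => \sum_c d c 0 * (X i c * ((w i)%:R * e i 0)))); last first.
    move=> i _; rewrite [(X *m d) i 0]mxE mulr_sumr mulr_sumr; apply: eq_bigr => c _; ring.
  rewrite exchange_big /=; rewrite big1 // => c _; by rewrite -mulr_sumr normc mulr0.
have -> : \sum_i (w i)%:R * resid X Y beta i ^+ 2 =
   \sum_i (w i)%:R * e i 0 ^+ 2 - 2 * \sum_i (w i)%:R * (e i 0 * (X *m d) i 0)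
   + \sum_i (w i)%:R * (X *m d) i 0 ^+ 2.
  rewrite mulr_sumr -sumrN -!big_split /=.
  by apply: eq_bigr => i _; rewrite rE; ring.
rewrite cross mulr0 subr0.
have -> : \sum_i (w i)%:R * resid X Y bh i ^+ 2 = \sum_i (w i)%:R * e i 0 ^+ 2.
  by apply: eq_bigr => i _; rewrite residE.
rewrite -[X in X <= _]addr0 lerD2l.
by apply: sumr_ge0 => i _; apply: mulr_ge0; rewrite ?ler0n ?sqr_ge0.
Qed.

End LS.

Section Fold.
Variables (R : realType) (n p h : nat) (X : 'M[R]_(n, p)) (Y : 'cV[R]_n).
Local Notation wT := {ffun 'I_n -> bool}.

Definition Inv (st : option wT) := if st is Some wm then inQ h wm else true.
Definition good (c : wT) (st : option wT) :=
  if st is Some wm then J X Y wm <= J X Y c else false.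

Lemma upd_inv st w : Inv st -> inQ h w -> Inv (bsa_update X Y st w).
Proof. case: st => [wm|] Hi Hw; rewrite /bsa_update; last by []. 
by case: ifP. Qed.

Lemma upd_good c st w : good c st -> good c (bsa_update X Y st w).
Proof.
case: st => [wm|] H; rewrite /bsa_update; last by [].
case: ifP => lt; last exact: H.
exact: le_trans (ltW lt) H.
Qed.

Lemma upd_self st w : good w (bsa_update X Y st w).
Proof.
case: st => [wm|]; rewrite /bsa_update; last exact: lexx.
case: ifP => lt; first exact: lexx.
by rewrite /good leNgt lt.
Qed.

Lemma foldu st cs c : Inv st -> all (inQ h) cs ->
  Inv (foldl (bsa_update X Y) st cs) /\
  (good c st \/ c \in cs -> good c (foldl (bsa_update X Y) st cs)).
Proof.
elim: cs st => [|w cs IH] st Hi; first by split => // -[].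
rewrite [all _ _]/= => /andP[Hw Hcs]; have Hi' := upd_inv Hi Hw.
have [I1 G1] := IH _ Hi' Hcs; split; first exact: I1.
move=> H; apply: G1.
rewrite in_cons in H; case: H => [g|/orP[/eqP ->|]]; last by right.
- by left; apply: upd_good.
- by left; apply: upd_self.
Qed.

Lemma filt_inQ beta : all (inQ h) [seq w <- enum wT | Zrel h X Y beta w].
Proof. by apply/allP => w; rewrite mem_filter /Zrel => /andP[/andP[]]. Qed.

Lemma step_inv st it : Inv st -> Inv (bsa_step h X Y st it).
Proof.
case: it => f s Hi; rewrite /bsa_step.
case: (sys_mx X f s \in unitmx); last exact: Hi.
case: (_ && _); last exact: Hi.
have [I1 _] := @foldu st _ [ffun=> false] Hi (filt_inQ (invmx (sys_mx X f s) *m sys_rhs Y f s)).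
exact: I1.
Qed.

Lemma step_good c st it : Inv st -> good c st -> good c (bsa_step h X Y st it).
Proof.
case: it => f s Hi G; rewrite /bsa_step.
case: (sys_mx X f s \in unitmx); last exact: G.
case: (_ && _); last exact: G.
have [_ G1] := @foldu st _ c Hi (filt_inQ (invmx (sys_mx X f s) *m sys_rhs Y f s)).
by apply: G1; left.
Qed.

Lemma fold_items c it0 items st : Inv st -> it0 \in items ->
  (forall st, Inv st -> good c (bsa_step h X Y st it0)) ->
  good c (foldl (bsa_step h X Y) st items).
Proof.
move=> Hi Hin Hit.
suff : forall st, Inv st -> (good c st \/ it0 \in items) -> good c (foldl (bsa_step h X Y) st items).
  by move=> /(_ st Hi); apply; right.
elim: items {Hin} => [|it its IH] st' Hi' H; first by case: H.
rewrite [foldl _ _ _]/=; apply: IH; first exact: step_inv.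
rewrite in_cons in H; case: H => [g|/orP[/eqP <-|]]; last by right.
- by left; apply: step_good.
- by left; apply: Hit.
Qed.

Lemma fold_inv items st : Inv st -> Inv (foldl (bsa_step h X Y) st items).
Proof. elim: items st => [|it its IH] st Hi //; rewrite [foldl _ _ _]/=; apply: IH; exact: step_inv. Qed.

End Fold.

Section Geo.
Variables (R : realType) (n p h : nat) (X : 'M[R]_(n, p)) (Y : 'cV[R]_n).
Variable (w : {ffun 'I_n -> bool}) (eps : 'I_n -> R).
Hypothesis (hn : (h < n)%N) (h0 : (0 < h)%N) (hQ : inQ h w).
Hypothesis (Mu : (X^T *m Wmx R w *m X) \in unitmx).
Hypothesis (eps1 : forall j, eps j = 1 \/ eps j = -1).

Local Notation r := (resid X Y).
Definition K := ('I_n * 'I_n * bool)%type.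
Definition validK (k : K) := w k.1.1 && ~~ w k.1.2.

Definition vK (k : K) : 'rV[R]_p :=
  if validK k then eps k.1.2 *: row k.1.2 X - sgnR R k.2 *: row k.1.1 X else 0.
Definition gK (k : K) (beta : 'cV[R]_p) : R :=
  if validK k then eps k.1.2 * r beta k.1.2 - sgnR R k.2 * r beta k.1.1 else 1.

Definition inP beta := forall k, 0 <= gK k beta.
Definition tight beta k := gK k beta == 0.

Definition Tmx beta : 'M[R]_(#|{: K}|, p) :=
  \matrix_(i, c) (if tight beta (enum_val i) then vK (enum_val i) 0 c else 0).

Lemma row_Tmx beta i :
  row i (Tmx beta) = if tight beta (enum_val i) then vK (enum_val i) else 0.
Proof.
apply/rowP => c; rewrite !mxE; case: ifP => _ //; by rewrite mxE.
Qed.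

Lemma resid_lin beta d t i : r (beta + t *: d) i = r beta i - t * (X *m d) i 0.
Proof. by rewrite /resid mulmxDr -scalemxAr !mxE; ring. Qed.

Lemma rowX_mul i (d : 'cV[R]_p) : (row i X *m d) 0 0 = (X *m d) i 0.
Proof. by rewrite -row_mul mxE. Qed.

Lemma vK_mul k (d : 'cV[R]_p) : (vK k *m d) 0 0 =
  if validK k then eps k.1.2 * (X *m d) k.1.2 0 - sgnR R k.2 * (X *m d) k.1.1 0 else 0.
Proof.
rewrite /vK; case: ifP => _; last by rewrite mul0mx mxE.
rewrite mulmxBl -!scalemxAl -!rowX_mul.
by move: (row k.1.2 X *m d) (row k.1.1 X *m d) => A B; rewrite !mxE.
Qed.

Lemma gK_lin k beta d t : gK k (beta + t *: d) = gK k beta - t * (vK k *m d) 0 0.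
Proof.
rewrite vK_mul /gK; case: ifP => _; last by rewrite mulr0 subr0.
rewrite !resid_lin; ring.
Qed.

Lemma tight_sub beta k : tight beta k -> (vK k <= Tmx beta)%MS.
Proof.
move=> T; have := row_sub (enum_rank k) (Tmx beta).
by rewrite row_Tmx enum_rankK T.
Qed.

Lemma tight_mul0 beta k (d : 'cV[R]_p) : Tmx beta *m d = 0 -> tight beta k -> vK k *m d = 0.
Proof.
move=> H T; have := congr1 (row (enum_rank k)) H.
by rewrite row_mul row_Tmx enum_rankK T row0.
Qed.

Lemma Tmx_mono beta beta' : (forall k, tight beta k -> tight beta' k) ->
  (Tmx beta <= Tmx beta')%MS.
Proof.
move=> H; apply/row_subP => i; rewrite row_Tmx; case: ifP => T.
  by apply: tight_sub; apply: H.
exact: sub0mx.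
Qed.

Lemma exists_in : exists a, w a.
Proof.
have : (0 < #|supp w|)%N by move: hQ; rewrite inQ_card => /eqP ->.
by case/card_gt0P => a; rewrite inE => Ha; exists a.
Qed.

Lemma exists_out : exists j, ~~ w j.
Proof.
have : (0 < #|~: supp w|)%N.
  have := cardsC (supp w); move: hQ; rewrite inQ_card card_ord => /eqP ->; lia.
by case/card_gt0P => a; rewrite !inE => Ha; exists a.
Qed.

Lemma lineality (d : 'cV[R]_p) : d != 0 -> exists k, (vK k *m d) 0 0 != 0.
Proof.
move=> dn0.
case: (boolP [exists k, (vK k *m d) 0 0 != 0]) => [/existsP[k Hk]|]; first by exists k.
rewrite negb_exists => /forallP H.
have H0 : forall k, (vK k *m d) 0 0 = 0 by move=> k; apply/eqP; rewrite -[_ == _]negbK H.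
have both : forall a j, w a -> ~~ w j -> (X *m d) a 0 = 0 /\ (X *m d) j 0 = 0.
  move=> a j wa wj.
  have v : validK (a, j, true) by rewrite /validK wa wj.
  have v' : validK (a, j, false) by rewrite /validK wa wj.
  have e1 := H0 (a, j, true); have e2 := H0 (a, j, false).
  rewrite vK_mul v in e1; rewrite vK_mul v' in e2; move: e1 e2; rewrite /sgnR /=.
  case: (eps1 j) => ->; move=> e1 e2; split; lra.
have Xd0 : X *m d = 0.
  apply/matrixP => i c; rewrite ord1 [RHS]mxE.
  case wi: (w i).
    by case: exists_out => j wj; case: (both i j wi wj).
  by case: exists_in => a wa; case: (both a i wa (negbT wi)).
exfalso; move/negP: dn0; apply; apply/eqP.
have E : X^T *m Wmx R w *m X *m d = 0 by rewrite -mulmxA Xd0 mulmx0.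
by rewrite -(mulKmx Mu d) E mulmx0.
Qed.

Lemma step beta : inP beta -> (\rank (Tmx beta) < p)%N ->
  exists beta', inP beta' /\ (\rank (Tmx beta) < \rank (Tmx beta'))%N.
Proof.
move=> Pb rk.
set A := (Tmx beta)^T.
have nf : ~~ row_free A by rewrite /row_free mxrank_tr neq_ltn rk.
case: (boolP [exists i, row i (kermx A) != 0]) => [/existsP[i Hi]|]; last first.
  rewrite negb_exists => /forallP H.
  move: nf; rewrite -kermx_eq0 => /negP; case; apply/eqP/row_matrixP => i.
  by rewrite row0; apply/eqP; rewrite -[_ == _]negbK H.
set d := (row i (kermx A))^T.
have dn0 : d != 0 by rewrite /d -[0](trmx0) (inj_eq (@trmx_inj _ _ _)).
have Td : Tmx beta *m d = 0.
  by rewrite /d -[Tmx beta]trmxK -trmx_mul -row_mul mulmx_ker row0 trmx0.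
case: (lineality dn0) => k1 Hk1.
set dd := if 0 < (vK k1 *m d) 0 0 then d else - d.
have Tdd : Tmx beta *m dd = 0 by rewrite /dd; case: ifP => _; rewrite ?mulmxN Td ?oppr0.
have Pk1 : 0 < (vK k1 *m dd) 0 0.
  rewrite /dd; case: ifP => // /negbT; rewrite -leNgt => le.
  rewrite mulmxN mxE oppr_gt0 lt_neqAle Hk1 le //.
set q := fun k => (vK k *m dd) 0 0.
set km := [arg min_(k < k1 | 0 < q k) (gK k beta / q k)]%O.
have [Pkm minkm] : 0 < q km /\ forall k, 0 < q k -> gK km beta / q km <= gK k beta / q k.
  rewrite /km; case: arg_minP => //= k Hk Hmin; split => // k' Hk'; exact: Hmin.
set t := gK km beta / q km.
have t0 : 0 <= t by rewrite /t divr_ge0 // ltW.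
have Hq : forall k, q k = (vK k *m dd) 0 0 by [].
exists (beta + t *: dd); split.
  move=> k; rewrite gK_lin -Hq.
  case: (ltP 0 (q k)) => qk.
    have := minkm k qk; rewrite -/t (ler_pdivlMr _ _ qk) => tle.
    by rewrite subr_ge0.
  rewrite subr_ge0; apply: le_trans (Pb k).
  by apply: mulr_ge0_le0.
have tt : forall k, tight beta k -> tight (beta + t *: dd) k.
  move=> k Tk; rewrite /tight gK_lin (tight_mul0 Tdd Tk) mxE mulr0 subr0; exact: Tk.
have tkm : tight (beta + t *: dd) km.
  by rewrite /tight gK_lin -Hq /t divfK ?subrr // gt_eqF.
have nsub : ~~ (vK km <= Tmx beta)%MS.
  apply/negP => /submxP [z Ez].
  move: Pkm; rewrite /q Ez -mulmxA Tdd mulmx0 mxE ltxx //.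
have sub := Tmx_mono tt.
have [le eqv] := mxrank_leqif_sup sub.
rewrite ltn_neqAle le andbT eqv; apply/negP => sub2.
by move/negP: nsub; apply; apply: submx_trans (tight_sub tkm) sub2.
Qed.

Lemma vertex_ind m : forall beta, inP beta -> (p - \rank (Tmx beta) <= m)%N ->
  exists beta0, inP beta0 /\ \rank (Tmx beta0) = p.
Proof.
elim: m => [|m IH] beta Pb le.
  exists beta; split => //; apply/eqP; rewrite eqn_leq rank_leq_col /=; lia.
case: (ltnP (\rank (Tmx beta)) p) => rk; last first.
  exists beta; split => //; apply/eqP; rewrite eqn_leq rank_leq_col rk.
  by [].
have [beta' [Pb' lt]] := step Pb rk.
apply: (IH beta' Pb'); have := rank_leq_col (Tmx beta'); lia.
Qed.

Lemma tight_valid beta k : tight beta k -> validK k.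
Proof. rewrite /tight /gK; case: ifP => // _; by rewrite oner_eq0. Qed.

Lemma tight_sq beta k : tight beta k -> sq X Y beta k.1.1 = sq X Y beta k.1.2.
Proof.
move=> T; have v := tight_valid T; move: T; rewrite /tight /gK v => /eqP.
rewrite /sq; case: (eps1 k.1.2) => ->; case: k.2; rewrite /sgnR => E; nra.
Qed.

Lemma row_free_nz m (M : 'M[R]_(m, p)) i : row_free M -> row i M != 0.
Proof.
move=> rf; apply/negP => /eqP E.
have : ~~ row_free M by apply/row_freePn; exists i; rewrite E sub0mx.
by rewrite rf.
Qed.

Lemma inP_region beta : inP beta -> forall a b, w a -> ~~ w b -> sq X Y beta a <= sq X Y beta b.
Proof.
move=> Pb a b wa wb; have v1 := Pb (a, b, true); have v2 := Pb (a, b, false).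
rewrite /gK /validK /= wa wb /= in v1 v2; rewrite /sq.
move: v1 v2; case: (eps1 b) => ->; rewrite /sgnR => v1 v2; nra.
Qed.

Variable beta1 : 'cV[R]_p.
Hypothesis reg1 : forall a b, w a -> ~~ w b -> sq X Y beta1 a <= sq X Y beta1 b.
Hypothesis eps_def : forall j, eps j = if 0 <= r beta1 j then 1 else -1.

Lemma inP1 : inP beta1.
Proof.
move=> k; rewrite /gK; case: ifP => v; last exact: ler01.
move: v; rewrite /validK => /andP[wa wj]; have := reg1 wa wj.
rewrite /sq eps_def; case: ifP => s0; case: k.2; rewrite /sgnR => H; nra.
Qed.


Hypothesis (p1 : (0 < p)%N) (HA2 : A2 h X Y).

Lemma vertex_found : exists it, it \in bsa_items n p /\
  forall st, Inv h st -> good X Y w (bsa_step h X Y st it).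
Proof.
have [beta0 [P0 rk0]] := @vertex_ind p beta1 inP1 (leq_subr _ _).
have [k0 Tk0] : exists k, tight beta0 k.
  case: (boolP [exists k, tight beta0 k]) => [/existsP[k Hk]|]; first by exists k.
  rewrite negb_exists => /forallP H; exfalso.
  have T0 : Tmx beta0 = 0.
    apply/row_matrixP => i; rewrite row_Tmx row0; by rewrite (negbTE (H (enum_val i))).
  by move: rk0 p1; rewrite T0 mxrank0 => <-.
have := tight_valid Tk0; rewrite /validK => /andP[wa wj].
have sq0 := tight_sq Tk0.
move: wa wj sq0; set a := k0.1.1; set j := k0.1.2 => wa wj sq0.
set m := sq X Y beta0 a.
have reg0 := inP_region P0.
have cW : #|supp w| = h by move: hQ; rewrite inQ_card => /eqP.
have regS : forall a b, a \in supp w -> b \notin supp w -> sq X Y beta0 a <= sq X Y beta0 b.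
  by move=> x y; rewrite !inE => Hx Hy; apply: reg0.
have aS : a \in supp w by rewrite inE.
have jS : j \notin supp w by rewrite inE.
have [o1 o2] := @vertex_sort _ _ _ _ X Y hn h0 _ beta0 a j m cW regS aS jS (erefl _) (esym sq0).
have mpos : 0 < m by rewrite -o1; apply: HA2.
have tm : forall k, tight beta0 k -> sq X Y beta0 k.1.1 = m /\ sq X Y beta0 k.1.2 = m.
  move=> k Tk; have := tight_valid Tk; rewrite /validK => /andP[wa' wj'].
  have e := tight_sq Tk.
  have l1 := reg0 _ _ wa' wj; have l2 := reg0 _ _ wa wj'.
  rewrite -/m in l2; rewrite -sq0 -/m in l1.
  split; lra.
set i1 := [arg min_(i < a | sq X Y beta0 i == m) (i : nat)]%O.
have [Ei1 mini1] : sq X Y beta0 i1 = m /\ forall e, sq X Y beta0 e = m -> (i1 <= e)%N.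
  rewrite /i1; case: arg_minP => [|i /eqP Hi Hmin]; first by rewrite eqxx.
  by split => // e He; have := Hmin e (introT eqP He).
have r1nz : r beta0 i1 != 0.
  apply/eqP => E; move: mpos; rewrite -Ei1 /sq E expr2 mul0r ltxx //.
set sgE := fun e => r beta0 e != r beta0 i1.
have rel : forall e, sq X Y beta0 e = m -> r beta0 i1 + sgnR R (sgE e) * r beta0 e = 0.
  move=> e He; rewrite /sgE; case: eqP => [->|ne]; rewrite /sgnR /=.
    by rewrite mulN1r subrr.
  have H2 : (r beta0 e - r beta0 i1) * (r beta0 e + r beta0 i1) = 0.
    by rewrite -subr_sqr; move: He; rewrite -Ei1 /sq => ->; rewrite subrr.
  move/eqP: H2; rewrite mulf_eq0 subr_eq0 => /orP[/eqP E|/eqP E]; first by case: ne.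
  by rewrite mul1r addrC E.
have r1cases : r beta0 i1 < 0 \/ 0 < r beta0 i1.
  by move: r1nz; rewrite neq_lt => /orP[]; [left|right].
set u := fun e => (if sq X Y beta0 e == m then row i1 X + sgnR R (sgE e) *: row e X else 0) : 'rV[R]_p.
set U : 'M[R]_(n, p) := \matrix_(e, c) u e 0 c.
have rowU : forall e, row e U = u e by move=> e; apply/rowP => c; rewrite !mxE.
have vsub : forall k, tight beta0 k -> (vK k <= U)%MS.
  move=> k Tk; have v := tight_valid Tk; have [ea ej] := tm k Tk.
  have eq : vK k = (eps k.1.2 * sgnR R (sgE k.1.2)) *: u k.1.2
                 + (- (sgnR R k.2 * sgnR R (sgE k.1.1))) *: u k.1.1.
    have Ha := rel _ ea; have Hj := rel _ ej.
    move: Tk; rewrite /tight /gK v => /eqP Tk.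
    rewrite /vK v /u ea ej eqxx; apply/rowP => c; rewrite !mxE.
    move: Ha Hj Tk; case: (eps1 k.1.2) => ->; case: (sgE k.1.2); case: (sgE k.1.1);
      case: k.2; rewrite /sgnR => Ha Hj Tk; case: r1cases => rc; lra.
  rewrite eq; apply: addmx_sub; apply: scalemx_sub; rewrite -rowU; exact: row_sub.
have TU : (Tmx beta0 <= U)%MS.
  apply/row_subP => i; rewrite row_Tmx; case: ifP => T; [exact: vsub | exact: sub0mx].
have rkU : \rank U = p by apply/eqP; rewrite eqn_leq rank_leq_col -{1}rk0 mxrankS.
set mrf := maxrankfun U.
have free := maxrowsub_free U.
have mrf_prop : forall i, sq X Y beta0 (mrf i) = m /\ mrf i != i1.
  move=> i; have := row_free_nz i free; rewrite row_rowsub rowU /u.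
  case: ifP => [/eqP Em nz|_]; last by rewrite eqxx.
  split => //; apply/eqP => E; move: nz; rewrite E /sgE /= eqxx /sgnR /=.
  by rewrite scaleN1r subrr eqxx.
set B := [set mrf i | i : 'I_(\rank U)].
have cB : #|B| = p by rewrite card_imset ?card_ord //; exact: maxrankfun_inj.
have Bprop : forall e, e \in B -> sq X Y beta0 e = m /\ (i1 < e)%N.
  move=> e /imsetP [i _ ->]; have [E1 E2] := mrf_prop i; split => //.
  rewrite ltn_neqAle mini1 // andbT; move: E2; apply: contra => /eqP E.
  by apply/eqP; apply: val_inj.
set eB := sort (fun x y : 'I_n => (x <= y)%N) (enum B).
have szB : size eB = p by rewrite size_sort -cardE cB.
have memB : forall e, (e \in eB) = (e \in B) by move=> e; rewrite mem_sort mem_enum.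
have uniqB : uniq eB by rewrite sort_uniq enum_uniq.
have sortB : sorted ltn (map val eB).
  rewrite ltn_sorted_uniq_leq map_inj_uniq ?uniqB //=; last exact: val_inj.
  rewrite sorted_map; apply: sort_sorted => x y; exact: leq_total.
have nthB : forall jj, (jj < p)%N -> nth i1 eB jj \in B by move=> jj lt; rewrite -memB mem_nth // szB.
have incB : forall j1 j2, (j1 < j2)%N -> (j2 < p)%N -> (nth i1 eB j1 < nth i1 eB j2)%N.
  move=> j1 j2 lt12 lt2.
  have := @sorted_ltn_nth _ ltn ltn_trans 0%N _ sortB j1 j2.
  rewrite !inE !size_map szB !(nth_map i1) ?szB //; last exact: ltn_trans lt12 lt2.
  by apply => //; exact: ltn_trans lt12 lt2.
set f : {ffun 'I_p.+1 -> 'I_n} := [ffun t => if unlift ord0 t is Some jj then nth i1 eB jj else i1].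
have f0 : f ord0 = i1 by rewrite /f ffunE unlift_none.
have fl : forall jj, f (lift ord0 jj) = nth i1 eB jj by move=> jj; rewrite /f ffunE liftK.
have incr : incr_tuple f.
  apply/forallP => x; apply/forallP => y; apply/implyP.
  case: (unliftP ord0 x) => [j1 ->|->]; case: (unliftP ord0 y) => [j2 ->|->];
    rewrite ?fl ?f0 ?lift0 //.
  - by rewrite ltnS => lt; apply: incB.
  - by move=> _; have [_ ->] := Bprop _ (nthB _ (ltn_ord j2)).
set sf : {ffun 'I_p -> bool} := [ffun jj : 'I_p => sgE (nth i1 eB jj)].
have sysE : forall jj, row jj (sys_mx X f sf) =
    row i1 X + sgnR R (sgE (nth i1 eB jj)) *: row (nth i1 eB jj) X.
  by move=> jj; apply/rowP => c; rewrite !mxE f0 fl ffunE.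
have sysU : forall jj, row jj (sys_mx X f sf) = row (nth i1 eB jj) U.
  move=> jj; rewrite sysE rowU /u; have [-> _] := Bprop _ (nthB _ (ltn_ord jj)).
  by rewrite eqxx.
have unit_sys : sys_mx X f sf \in unitmx.
  rewrite -row_free_unit /row_free eqn_leq rank_leq_col /=.
  have S : (rowsub mrf U <= sys_mx X f sf)%MS.
    apply/row_subP => i; rewrite row_rowsub.
    have eB_in : mrf i \in eB by rewrite memB; apply: imset_f.
    have lt : (index (mrf i) eB < p)%N by have := index_mem (mrf i) eB; rewrite eB_in szB.
    rewrite -(nth_index i1 eB_in) -[index _ _]/(nat_of_ord (Ordinal lt)) -sysU.
    exact: row_sub.
  move: free; rewrite /row_free => /eqP rr.
  by apply: leq_trans (mxrankS S); rewrite rr rkU.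
have solve : sys_mx X f sf *m beta0 = sys_rhs Y f sf.
  apply/colP => jj.
  rewrite [LHS](_ : _ = (row jj (sys_mx X f sf) *m beta0) 0 0); last by rewrite -row_mul [RHS]mxE.
  rewrite sysE mulmxDl -scalemxAl.
  move: (row i1 X *m beta0) (row (nth i1 eB jj) X *m beta0) (rowX_mul i1 beta0) (rowX_mul (nth i1 eB jj) beta0) => A1 A2 E1 E2.
  rewrite !mxE E1 E2 f0 fl ffunE.
  have [Em _] := Bprop _ (nthB _ (ltn_ord jj)).
  move: (rel _ Em); rewrite /resid.
  by case: (sgE _); rewrite /sgnR => H; lra.
have beq : invmx (sys_mx X f sf) *m sys_rhs Y f sf = beta0 by rewrite -solve mulKmx.
exists (f, sf); split.
  rewrite /bsa_items; apply: allpairs_f; last exact: mem_enum.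
  by rewrite mem_filter incr; exact: mem_enum.
move=> st Hi; rewrite /bsa_step unit_sys beq.
have cond : (resid X Y beta0 (f ord0) ^+ 2 == ord_sq_res X Y beta0 h)
            && (ord_sq_res X Y beta0 h == ord_sq_res X Y beta0 h.+1).
  by rewrite f0 o1 o2 -/(sq X Y beta0 i1) Ei1 !eqxx.
rewrite cond.
have Zw : Zrel h X Y beta0 w.
  rewrite /Zrel hQ /=; apply/eqP.
  change (OF h X Y beta0 = \sum_i (w i)%:R * resid X Y beta0 i ^+ 2).
  by rewrite (region_OF hn h0 cW regS) wsum.
have [_ G] := @foldu R n p h X Y st _ w Hi (filt_inQ h X Y beta0).
by apply: G; right; rewrite mem_filter Zw mem_enum.
Qed.

End Geo.

Unset Implicit Arguments.

Theorem theorem2 (R : realType) (n p h : nat) (X : 'M[R]_(n, p)) (Y : 'cV[R]_n) :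
  (p < n)%N -> (1 <= p)%N -> (p <= h)%N -> (h < n)%N ->
  A1 X -> A2 h X Y -> A3 X -> A4 h X ->
  exists betahat : 'cV[R]_p,
    bsa_output h X Y = Some betahat /\
    forall beta : 'cV[R]_p, OF h X Y betahat <= OF h X Y beta.
Proof.
move=> pn p1 ph hn HA1 HA2 HA3 HA4.
have h0 : (0 < h)%N by apply: leq_trans p1 ph.
have [w0 [Q0 _]] := exists_w X Y hn (0 : 'cV[R]_p).
set ws := [arg min_(v < w0 | inQ h v) J X Y v]%O.
have [Qs mins] : inQ h ws /\ forall v, inQ h v -> J X Y ws <= J X Y v.
  rewrite /ws; case: arg_minP => // v Hv Hmin; split => // v' Hv'; exact: Hmin.
have Mus := HA4 ws Qs.
set beta1 := beta_of X Y ws.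
have cWs : #|supp ws| = h by move: Qs; rewrite inQ_card => /eqP.
have Jws : J X Y ws = \sum_(i in supp ws) sq X Y beta1 i by rewrite J_eq wsum.
have OFeq : OF h X Y beta1 = \sum_(i in supp ws) sq X Y beta1 i.
  apply/eqP; rewrite eq_le (OF_le X Y hn h0 beta1 cWs) /=.
  have [wT [QT ZT]] := exists_w X Y hn beta1.
  move: ZT; rewrite /Zrel QT => /eqP ZT.
  have e1 : OF h X Y beta1 = \sum_i (wT i)%:R * resid X Y beta1 i ^+ 2 := ZT.
  rewrite -Jws e1; apply: le_trans (mins wT QT) _; exact: (J_le Y beta1 (HA4 wT QT)).
have reg1 : forall a b, ws a -> ~~ ws b -> sq X Y beta1 a <= sq X Y beta1 b.
  move=> a b wa wb; rewrite leNgt; apply/negP => lt.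
  have bn : b \notin supp ws :\ a by rewrite !inE (negbTE wb) andbF.
  have aS : a \in supp ws by rewrite inE.
  have cW' : #|b |: (supp ws :\ a)| = h.
    by rewrite cardsU1 bn; have := cardsD1 a (supp ws); rewrite aS cWs /= => ->.
  have := OF_le X Y hn h0 beta1 cW'; rewrite OFeq (big_setD1 a aS) big_setU1 //= lerD2r => H.
  by move: (lt_le_trans lt H); rewrite ltxx.
set eps := fun j => (if 0 <= resid X Y beta1 j then 1 else -1) : R.
have eps1 : forall j, eps j = 1 \/ eps j = -1 by move=> j; rewrite /eps; case: ifP; [left|right].
have [it [Hit Hgood]] := vertex_found hn h0 Qs Mus eps1 reg1 (fun j => erefl) p1 HA2.
have G := fold_items (st := None) isT Hit Hgood.
have I := fold_inv X Y (bsa_items n p) (isT : Inv h None).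
rewrite /bsa_output /bsa_wmin.
move: G I; case: (foldl _ None _) => [wm|]; last by [].
rewrite /good /Inv => G I.
exists (beta_of X Y wm); split => // beta.
have cWm : #|supp wm| = h by move: I; rewrite inQ_card => /eqP.
have [wb [Qb Zb]] := exists_w X Y hn beta.
move: Zb; rewrite /Zrel Qb => /eqP Zb.
have e1 : OF h X Y beta = \sum_i (wb i)%:R * resid X Y beta i ^+ 2 := Zb.
apply: le_trans (OF_le X Y hn h0 _ cWm) _.
rewrite -wsum -J_eq e1.
apply: le_trans G _; apply: le_trans (mins wb Qb) _; exact: (J_le Y beta (HA4 wb Qb)).
Qed.
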